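(* Let $X$ be a real reflexive Banach space satisfying (CFPP). Let $F = \bigcap_{k=1}^\infty F_k$, where for each $k$, $F_k = \{x \in X : f_k(x) \le d_k\}$ with $f_k \in X^*$, $\|f_k\| = 1$, $d_k \ge 0$, and $F_k$ is a contractive set. For each $k$ let $y_k \in X$ with $f_k(y_k) = 1$ be such that $P_k x = x - f_k(x) y_k$ defines a linear projection of norm one from $X$ onto $\ker(f_k)$. If $0 \notin \mathrm{cl}(\mathrm{conv}(\{y_k\}_{k \in \mathbb{N}}))$, then $F$ is a contractive set.
   Context: A real Banach space $X$ has (CFPP) if for every non-empty, convex, closed and bounded set $D \subset X$ and every nonexpansive mapping $T : X \to X$ (i.e. $\|Tx - Ty\| \le \|x-y\|$) with $T(D) \subset D$, $T$ has a fixed point in $D$. A non-empty set $D \subset X$ is contractive if there exists $P : X \to D$ with $P|_D = \mathrm{id}_D$ and $\|Px - Py\| \le \|x-y\|$ for all $x,y \in X$. $\mathrm{cl}(\mathrm{conv}(\cdot))$ is the norm-closed convex hull. *)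

(* Defs.v *)
From HB Require Import structures.
From mathcomp Require Import all_boot all_order all_algebra.
From mathcomp Require Import all_classical all_reals all_analysis.
Set Implicit Arguments. Unset Strict Implicit. Unset Printing Implicit Defensive.
Import Order.TTheory GRing.Theory Num.Theory.
Import numFieldNormedType.Exports.
Local Open Scope classical_set_scope.
Local Open Scope ring_scope.

Section Defs.
Variables (R : realType) (X : normedModType R).

Definition nonexpansive (T : X -> X) := forall x y, `|T x - T y| <= `|x - y|.

Definition convex_subset (D : set X) :=
  forall x y t, D x -> D y -> 0 <= t -> t <= 1 -> D (t *: x + (1 - t) *: y).

Definition bounded_subset (D : set X) := exists M : R, forall x, D x -> `|x| <= M.

Definition CFPP := forall (D : set X), D !=set0 -> convex_subset D -> closed D ->
  bounded_subset D -> forall T : X -> X, nonexpansive T -> T @` D `<=` D ->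
  exists2 x, D x & T x = x.

Definition contractive (D : set X) := D !=set0 /\
  exists P : X -> X, (forall x, D (P x)) /\ (forall x, D x -> P x = x) /\ nonexpansive P.

Definition linear_functional (f : X -> R) :=
  forall (a : R) x y, f (a *: x + y) = a * f x + f y.
Definition dual_elem (f : X -> R) := linear_functional f /\ continuous f.

Definition dual_norm (f : X -> R) : R := sup [set `|f x| | x in [set x | `|x| <= 1]].
Definition op_norm (g : X -> X) : R := sup [set `|g x| | x in [set x | `|x| <= 1]].

Definition reflexive_space := forall phi : (X -> R) -> R,
  (forall (a : R) f g, dual_elem f -> dual_elem g ->
     phi (fun x => a * f x + g x) = a * phi f + phi g) ->
  (exists C : R, forall f, dual_elem f -> `|phi f| <= C * dual_norm f) ->
  exists x : X, forall f, dual_elem f -> phi f = f x.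

Definition conv_hull (A : set X) : set X :=
  [set z | exists (n : nat) (w : 'I_n -> R) (p : 'I_n -> X),
     [/\ forall i, 0 <= w i, \sum_i w i = 1, forall i, A (p i) &
         z = \sum_i w i *: p i]].

End Defs.

(* Main.v *)
Require Import Defs.
From HB Require Import structures.
From mathcomp Require Import all_boot all_order all_algebra.
From mathcomp Require Import all_classical all_reals all_analysis.
From mathcomp Require Import ring lra zify.
From Stdlib Require Import Lia.
Import Order.TTheory GRing.Theory Num.Theory.
Import numFieldNormedType.Exports.
Local Open Scope classical_set_scope.
Local Open Scope ring_scope.


Lemma lf0 (R : realType) (X : normedModType R) (f : X -> R) :
  linear_functional f -> f 0 = 0.
Proof.
move=> lf; have := lf 1 0 0; rewrite scale1r addr0 mul1r; lra.
Qed.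

Lemma lfZ (R : realType) (X : normedModType R) (f : X -> R) a x :
  linear_functional f -> f (a *: x) = a * f x.
Proof. by move=> lf; have := lf a x 0; rewrite addr0 lf0 // addr0. Qed.

Lemma lfB (R : realType) (X : normedModType R) (f : X -> R) x z :
  linear_functional f -> f (x - z) = f x - f z.
Proof.
move=> lf; have := lf 1 x (- z); rewrite scale1r mul1r => ->.
by rewrite -scaleN1r lfZ // mulN1r.
Qed.

Lemma sup_norm_le (R : realType) (X : normedModType R) (h : X -> R) :
  (forall a x, h (a *: x) = `|a| * h x) ->
  sup [set h x | x in [set x | `|x| <= 1]] = 1 ->
  has_sup [set h x | x in [set x | `|x| <= 1]] /\ forall x, h x <= `|x|.
Proof.
move=> hZ hs.
have HS : has_sup [set h x | x in [set x | `|x| <= 1]].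
  by case: (pselect (has_sup [set h x | x in [set x | `|x| <= 1]])) => // /sup_out;
    rewrite hs => /eqP; rewrite oner_eq0.
split=> // x.
have [->|x0] := eqVneq x 0.
  by rewrite -(scale0r (0:X)) hZ scale0r !normr0 mul0r.
have nx : 0 < `|x| by rewrite normr_gt0.
have := sup_upper_bound HS (ex_intro2 _ _ (`|x|^-1 *: x) _ erefl).
rewrite hs hZ normfV normr_id ler_pdivrMl // mulr1; apply.
by rewrite /= normrZ normfV normr_id mulVf // gt_eqF.
Qed.



Definition stepQ (R : realType) (X : normedModType R) (f : X -> R) (d : R) (y : X)
  (x : X) : X := x - Num.max (f x - d) 0 *: y.
Arguments stepQ {R X}.

Lemma max_interp (R : realType) (p q : R) : exists t : R,
  [/\ 0 <= t, t <= 1 & Num.max p 0 - Num.max q 0 = t * (p - q)].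
Proof.
case: (lerP p 0) => hp; case: (lerP q 0) => hq.
- by exists 0; rewrite mul0r subrr.
- exists (q / (q - p)).
  have hqp : 0 < q - p by lra.
  split; first by rewrite divr_ge0 // ltW.
  + by rewrite ler_pdivrMr // mul1r; lra.
  + have -> : p - q = -(q - p) by rewrite opprB.
    rewrite mulrN divfK ?gt_eqF //; lra.
- exists (p / (p - q)).
  have hqp : 0 < p - q by lra.
  split; first by rewrite divr_ge0 // ltW.
  + by rewrite ler_pdivrMr // mul1r; lra.
  + by rewrite divfK ?gt_eqF // subr0.
- by exists 1; rewrite mul1r.
Qed.

Arguments max_interp {R}.

Lemma zmod4 (V : zmodType) (x z u v : V) : x - u - (z - v) = (x - z) - (u - v).
Proof. by rewrite !opprB [LHS]addrACA [RHS]addrACA (addrC (- u)). Qed.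

Lemma stepQ_ne (R : realType) (X : normedModType R) (f : X -> R) (d : R) (y x z : X) :
  linear_functional f -> (forall x, `|x - f x *: y| <= `|x|) ->
  `|stepQ f d y x - stepQ f d y z| <= `|x - z|.
Proof.
move=> lf hP; rewrite /stepQ.
have [t [t0 t1 ht]] := max_interp (f x - d) (f z - d).
have E1 : (1 - t) *: (x - z) + t *: ((x - z) - f (x - z) *: y)
    = (x - z) - (t * f (x - z)) *: y.
  set u := x - z.
  by rewrite scalerBl scale1r (scalerBr t u) scalerA addrA subrK.
have E2 : t * f (x - z) = Num.max (f x - d) 0 - Num.max (f z - d) 0.
  by rewrite ht lfB //; ring.
rewrite zmod4 -scalerBl -E2 -E1.
apply: (le_trans (ler_normD _ _)); rewrite !normrZ.
rewrite (ger0_norm t0) ger0_norm ?subr_ge0 //.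
have := hP (x - z) => h.
have : t * `|x - z - f (x - z) *: y| <= t * `|x - z| by rewrite ler_wpM2l.
lra.
Qed.



Definition kk (n : nat) : nat := logn 2 n.+1.

Fixpoint xs (R : realType) (X : normedModType R) (f : nat -> X -> R) (d : nat -> R)
  (y : nat -> X) (x : X) (n : nat) : X :=
  match n with
  | 0 => x
  | n.+1 => stepQ (f (kk n)) (d (kk n)) (y (kk n)) (xs R X f d y x n)
  end.
Arguments xs {R X}.

Definition cc (R : realType) (X : normedModType R) (f : nat -> X -> R) (d : nat -> R)
  (y : nat -> X) (x : X) (n : nat) : R :=
  Num.max (f (kk n) (xs f d y x n) - d (kk n)) 0.
Arguments cc {R X}.

Definition uu (R : realType) (X : normedModType R) (f : nat -> X -> R) (d : nat -> R)
  (y : nat -> X) (x : X) (N : nat) : R := \sum_(i < N) cc f d y x i.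
Arguments uu {R X}.

Lemma kk_inf j N : exists2 n, (N <= n)%N & kk n = j.
Proof.
exists (2 ^ j * (2 * N).+1).-1.
  rewrite -ltnS prednK ?muln_gt0 ?expn_gt0 //.
  apply: (@leq_trans (2 * N).+1); first by lia.
  by rewrite leq_pmull // expn_gt0.
rewrite /kk prednK ?muln_gt0 ?expn_gt0 //.
rewrite lognM ?expn_gt0 // pfactorK // logn_coprime ?addn0 //.
by rewrite coprime2n /= oddM.
Qed.

Lemma xs_ne (R : realType) (X : normedModType R) (f : nat -> X -> R) (d : nat -> R)
  (y : nat -> X) :
  (forall k, linear_functional (f k)) ->
  (forall k x, `|x - f k x *: y k| <= `|x|) ->
  forall x z n, `|xs f d y x n - xs f d y z n| <= `|x - z|.
Proof.
move=> lf hP x z; elim=> [//|n IH] /=.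
apply: le_trans IH; apply: stepQ_ne; [exact: lf | exact: hP].
Qed.

Lemma xs0 (R : realType) (X : normedModType R) (f : nat -> X -> R) (d : nat -> R)
  (y : nat -> X) :
  (forall k, linear_functional (f k)) -> (forall k, 0 <= d k) ->
  forall n, xs f d y 0 n = 0.
Proof.
move=> lf hd; elim=> [//|n IH] /=; rewrite IH /stepQ lf0 // sub0r.
by rewrite max_r ?scale0r ?oppr0 // sub0r oppr_le0.
Qed.

Lemma xs_fix (R : realType) (X : normedModType R) (f : nat -> X -> R) (d : nat -> R)
  (y : nat -> X) x :
  (forall k, f k x <= d k) -> forall n, xs f d y x n = x.
Proof.
move=> hx; elim=> [//|n IH] /=; rewrite IH /stepQ.
by rewrite max_r ?scale0r ?subr0 // subr_le0.
Qed.

Lemma cc_ge0 (R : realType) (X : normedModType R) (f : nat -> X -> R) (d : nat -> R)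
  (y : nat -> X) x n : 0 <= cc f d y x n.
Proof. by rewrite /cc le_max lexx orbT. Qed.
Arguments cc_ge0 {R X}.

Lemma uuS (R : realType) (X : normedModType R) (f : nat -> X -> R) (d : nat -> R)
  (y : nat -> X) x n : uu f d y x n.+1 = uu f d y x n + cc f d y x n.
Proof. by rewrite /uu big_ord_recr. Qed.

Lemma uu_mono (R : realType) (X : normedModType R) (f : nat -> X -> R) (d : nat -> R)
  (y : nat -> X) x m n : (m <= n)%N -> uu f d y x m <= uu f d y x n.
Proof.
move=> /subnK <-; elim: (n - m)%N => [|k IH]; first by rewrite add0n.
rewrite addSn uuS; apply: (le_trans IH); rewrite lerDl; exact: cc_ge0.
Qed.

Lemma xs_sum (R : realType) (X : normedModType R) (f : nat -> X -> R) (d : nat -> R)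
  (y : nat -> X) x N :
  xs f d y x N - x = - \sum_(i < N) cc f d y x i *: y (kk i).
Proof.
elim: N => [|N IH]; first by rewrite big_ord0 subrr oppr0.
rewrite big_ord_recr /= /stepQ -/(cc f d y x N) opprD -IH.
by rewrite addrAC.
Qed.

Lemma xs_cauchy (R : realType) (X : normedModType R) (f : nat -> X -> R) (d : nat -> R)
  (y : nat -> X) x M N : (forall k, `|y k| <= 4) -> (M <= N)%N ->
  `|xs f d y x N - xs f d y x M| <= 4 * (uu f d y x N - uu f d y x M).
Proof.
move=> hy /subnK <-; elim: (N - M)%N => [|k IH]; first by rewrite add0n !subrr normr0 mulr0.
rewrite addSn uuS /= /stepQ -/(cc f d y x (k + M)%N).
rewrite addrAC; apply: (le_trans (ler_normB _ _)); rewrite normrZ.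
have := cc_ge0 f d y x (k + M); set c := cc _ _ _ _ _ => c0.
rewrite (ger0_norm c0).
have : c * `|y (kk (k + M))| <= c * 4 by rewrite ler_wpM2l.
lra.
Qed.
Arguments xs_ne {R X f d y}.
Arguments xs0 {R X f d y}.
Arguments xs_fix {R X f d y}.
Arguments uuS {R X}.
Arguments uu_mono {R X}.
Arguments xs_sum {R X}.
Arguments xs_cauchy {R X}.



Lemma gap (R : realType) (X : normedModType R) (C : set X) :
  ~ closure C 0 -> exists2 r : R, 0 < r & forall w, C w -> r <= `|w|.
Proof.
apply: contra_notP => H B /nbhs_ballP [r /= r0 rB].
have : ~ (forall w, C w -> r <= `|w|) by move=> h; apply: H; exists r.
move=> /existsNP [w /not_implyP [Cw /negP]]; rewrite -ltNge => wr.
exists w; split => //; apply: rB; rewrite -ball_normE /ball_ /= sub0r normrN //.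
Qed.

Lemma uu_ge0 (R : realType) (X : normedModType R) (f : nat -> X -> R) (d : nat -> R)
  (y : nat -> X) x N : 0 <= uu f d y x N.
Proof. by have := uu_mono f d y x 0 N (leq0n N); rewrite /uu big_ord0. Qed.
Arguments uu_ge0 {R X}.

Lemma uu_bound (R : realType) (X : normedModType R) (f : nat -> X -> R) (d : nat -> R)
  (y : nat -> X) (r : R) :
  (forall k, linear_functional (f k)) ->
  (forall k x, `|x - f k x *: y k| <= `|x|) ->
  (forall k, 0 <= d k) -> 0 < r ->
  (forall w, conv_hull (range y) w -> r <= `|w|) ->
  forall x N, r * uu f d y x N <= 2 * `|x|.
Proof.
move=> lf hP hd r0 hr x N.
set S := \sum_(i < N) cc f d y x i *: y (kk i).
have hS : `|S| <= 2 * `|x|.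
  rewrite -normrN -xs_sum.
  have := xs_ne (d:=d) lf hP x 0 N; rewrite (xs0 (y:=y)) // !subr0 => h.
  apply: (le_trans (ler_normB _ _)); lra.
have [u0|upos] := eqVneq (uu f d y x N) 0.
  by rewrite u0 mulr0 mulr_ge0.
have ugt : 0 < uu f d y x N by rewrite lt_def upos uu_ge0.
have hw : conv_hull (range y) ((uu f d y x N)^-1 *: S).
  exists N, (fun i => cc f d y x i / uu f d y x N), (fun i => y (kk i)); split.
  - by move=> i; rewrite divr_ge0 ?cc_ge0 ?uu_ge0.
  - by rewrite -mulr_suml divff.
  - by move=> i; exists (kk i).
  - by rewrite /S scaler_sumr; apply: eq_bigr => i _; rewrite scalerA mulrC.
have := hr _ hw; rewrite normrZ ger0_norm ?invr_ge0 ?uu_ge0 // => h.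
have := ler_wpM2l (uu_ge0 f d y x N) h; rewrite mulrA mulfV // mul1r mulrC => h2.
exact: le_trans h2 hS.
Qed.



Theorem theorem22 (R : realType) (X : completeNormedModType R)
  (f : nat -> X -> R) (d : nat -> R) (y : nat -> X) :
  reflexive_space X -> CFPP X ->
  (forall k, dual_elem (f k)) ->
  (forall k, dual_norm (f k) = 1) ->
  (forall k, 0 <= d k) ->
  (forall k, contractive [set x : X | f k x <= d k]) ->
  (forall k, f k (y k) = 1) ->
  (forall k, op_norm (fun x : X => x - f k x *: y k) = 1) ->
  ~ closure (conv_hull (range y)) 0 ->
  contractive (\bigcap_k [set x : X | f k x <= d k]).
Proof.
move=> _ _ hdual hnorm hd _ hfy hop hcl.
have lf : forall k, linear_functional (f k) by move=> k; case: (hdual k).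
have hf' : forall k, has_sup [set `|f k x| | x in [set x : X | `|x| <= 1]] /\
    forall x, `|f k x| <= `|x|.
  move=> k; apply: (sup_norm_le _ _ (fun x => `|f k x|)) => [a x|].
    by rewrite /= lfZ // normrM.
  exact: hnorm.
have hf : forall k x, `|f k x| <= `|x| by move=> k; case: (hf' k).
have hP : forall k x, `|x - f k x *: y k| <= `|x|.
  move=> k; apply: (proj2 (sup_norm_le _ _ (fun x => `|x - f k x *: y k|) _ _)).
    by move=> a x; rewrite /= lfZ // -scalerA -scalerBr normrZ.
  exact: hop.
have hy : forall k, `|y k| <= 4.
  move=> k; have [HS _] := hf' k.
  have h2 : (0 : R) < 1 / 2 by lra.
  have [_ [x x1 <-]] := sup_adherent h2 HS.
  have := hnorm k; rewrite /dual_norm => -> hx.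
  have : `|f k x *: y k| <= 2.
    have -> : f k x *: y k = x - (x - f k x *: y k) by rewrite opprB addrC subrK.
    apply: (le_trans (ler_normB _ _)); have := hP k x; move: x1 => /= x1; lra.
  rewrite normrZ => h; have := normr_ge0 (y k); nra.
have [r r0 hr] := @gap _ _ _ hcl.
have hr' : forall w, conv_hull (range y) w -> r <= `|w|
  by [].

have ub : forall x N, uu f d y x N <= 2 * `|x| / r.
  move=> x N; rewrite ler_pdivlMr // mulrC; exact: uu_bound lf hP hd r0 hr' x N.
pose s x := sup (range (uu f d y x)).
have hs : forall x, has_sup (range (uu f d y x)).
  move=> x; split; first by exists (uu f d y x 0), 0.
  by exists (2 * `|x| / r) => _ [N _ <-]; exact: ub.
have us : forall x N, uu f d y x N <= s x.
  by move=> x N; apply: sup_upper_bound => //; exists N.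
have adh : forall x e, 0 < e -> exists M, s x - e < uu f d y x M.
  move=> x e e0; have [_ [M _ <-] h] := sup_adherent e0 (hs x); by exists M.
have hcv : forall x, cvg (xs f d y x @ \oo).
  move=> x; apply: cauchy_cvg; apply: cauchy_exP => e e0.
  have e8 : 0 < e / 8 by rewrite divr_gt0.
  have [M hM] := adh x _ e8.
  exists (xs f d y x M); exists M => // n /= hn.
  rewrite -ball_normE /ball_ /= distrC.
  have := xs_cauchy f d y x M n hy hn; have := us x n; lra.
pose Rm x := lim (xs f d y x @ \oo).
have hlim : forall x e, 0 < e -> exists N, forall n, (N <= n)%N ->
    `|Rm x - xs f d y x n| < e.
  move=> x e e0; have /cvgrPdist_lt /(_ e e0) [N _ hN] := hcv x.
  by exists N => n hn; apply: hN.
split.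
  by exists 0 => k _ /=; rewrite lf0.
exists Rm; split; [|split].
- move=> x k _ /=; rewrite leNgt; apply/negP => hlt.
  pose eps := (f k (Rm x) - d k) / 2.
  have e0 : 0 < eps by rewrite divr_gt0 // subr_gt0.
  have [M hM] := adh x _ e0.
  have [N0 hN0] := hlim x _ e0.
  have [n hn hkn] := kk_inf k (maxn M N0).
  have hMn : (M <= n)%N by apply: leq_trans hn; exact: leq_maxl.
  have hNn : (N0 <= n)%N by apply: leq_trans hn; exact: leq_maxr.
  have h1 := hN0 n hNn.
  have h2 : `|f k (Rm x) - f k (xs f d y x n)| <= `|Rm x - xs f d y x n|.
    by rewrite -lfB //; exact: hf.
  have h3 : f k (xs f d y x n) - d k <= cc f d y x n.
    by rewrite /cc hkn le_max lexx.
  have h4 := uuS f d y x n.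
  have h5 := us x n.+1.
  have h6 := uu_mono f d y x M n hMn.
  have h7 : f k (Rm x) - f k (xs f d y x n) <= `|f k (Rm x) - f k (xs f d y x n)|.
    exact: ler_norm.
  rewrite /eps in e0 hM h1; lra.
- move=> x hx; have hx' : forall k, f k x <= d k by move=> k; exact: hx.
  apply/eqP; rewrite -subr_eq0 -normr_le0; apply/ler_addgt0Pr => e e0.
  have [N hN] := hlim x _ e0.
  have := hN N (leqnn N); rewrite xs_fix // add0r => h; exact: ltW.
- move=> x z; apply/ler_addgt0Pr => e e0.
  have e2 : 0 < e / 2 by rewrite divr_gt0.
  have [N1 hN1] := hlim x _ e2; have [N2 hN2] := hlim z _ e2.
  have h1 := hN1 (maxn N1 N2) (leq_maxl _ _).
  have h2 := hN2 (maxn N1 N2) (leq_maxr _ _).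
  have h3 := xs_ne (d:=d) lf hP x z (maxn N1 N2).
  set a := xs f d y x _ in h1 h3; set b := xs f d y z _ in h2 h3.
  have -> : Rm x - Rm z = (Rm x - a) + (a - b) - (Rm z - b).
    by rewrite [in RHS]addrA subrK opprB addrA subrK.
  apply: (le_trans (ler_normB _ _)); rewrite distrC.
  apply: (le_trans (lerD (ler_normD _ _) (lexx _))).
  rewrite (distrC b); lra.
Qed.
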